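(* Let $m\geq 1$ and $n>1$ be integers and let $G$ be an $r$-regular graph of order $m$. If $n\equiv 0\pmod 2$, or $mn\equiv 1\pmod 2$, or $G$ is distance magic, then $G\circ nK_1$ is distance magic.
   Context: A graph $G$ on $v$ vertices is distance magic if there is a bijection $f:V(G)\to\{1,\ldots,v\}$ and a constant $k$ such that for every vertex $x$, $\sum_{y\in N(x)}f(y)=k$, where $N(x)$ is the set of neighbours of $x$. $nK_1$ is the edgeless graph on $n$ vertices. The lexicographic product $G\circ H$ has vertex set $V(G)\times V(H)$, with $(g,h)$ adjacent to $(g',h')$ iff either $gg'\in E(G)$, or $g=g'$ and $hh'\in E(H)$. *)

(* Defs.v *)
From mathcomp Require Import all_boot.
Set Implicit Arguments. Unset Strict Implicit. Unset Printing Implicit Defensive.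

Definition simple_graph (V : finType) (e : rel V) : Prop :=
  symmetric e /\ irreflexive e.

Definition regular (V : finType) (e : rel V) (r : nat) : Prop :=
  forall x : V, #|[set y | e x y]| = r.

(* Distance magic: a bijection f : V -> {1,...,|V|} (an injective map into
   {1,..,|V|}, hence a bijection by cardinality) and a constant k with
   sum_{y in N(x)} f y = k for all x. *)
Definition distance_magic (V : finType) (e : rel V) : Prop :=
  exists f : V -> nat,
    (forall x, 1 <= f x <= #|V|) /\ injective f /\
    exists k : nat, forall x : V, \sum_(y | e x y) f y = k.

(* Lexicographic product G o nK_1: vertex set V x 'I_n, (g,h) ~ (g',h')
   iff g g' is an edge of G (nK_1 has no edges). *)
Definition lex_nK1 (V : finType) (e : rel V) (n : nat) : rel (V * 'I_n) :=
  fun u w => e u.1 w.1.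
Arguments lex_nK1 V e n : clear implicits.
Arguments lex_nK1 {V} e n.

(* Main.v *)
Require Import Defs.
From mathcomp Require Import all_boot zify.

Lemma key (V : finType) (e : rel V) (m n r : nat) (s : nat -> V -> nat) :
  #|V| = m -> regular e r -> (forall j, injective (s j)) -> (forall j y, s j y < m) ->
  (exists K, forall x, \sum_(y | e x y) \sum_(j < n) s j y = K) ->
  distance_magic (lex_nK1 e n).
Proof.
move=> hm hr hinj hlt [K hK].
exists (fun p : V * 'I_n => p.2 * m + s p.2 p.1 + 1); split; [|split].
- move=> [y j] /=; rewrite card_prod card_ord hm.
  have := hlt j y; have := ltn_ord j; nia.
- move=> [y j] [y' j'] /= H.
  have hj : (j : nat) = j'.
    have := hlt j y; have := hlt j' y'.
    case: (ltngtP j j') => // hjj h1 h2.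
    + have : j.+1 * m <= j' * m by rewrite leq_mul2r hjj orbT.
      lia.
    + have : j'.+1 * m <= j * m by rewrite leq_mul2r hjj orbT.
      lia.
  have hj' : j = j' by apply: val_inj.
  subst j'; congr pair; apply: (hinj j); lia.
- exists (r * \sum_(j < n) (j * m + 1) + K) => -[x i].
  rewrite /lex_nK1 /=.
  rewrite (eq_bigl (fun p : V * 'I_n => e x p.1 && true)); last by move=> p; rewrite andbT.
  rewrite -(pair_big_dep (fun y => e x y) (fun _ _ => true) (fun y (j : 'I_n) => j * m + s j y + 1)) /=.
  have E : forall y, \sum_(j < n | true) (j * m + s j y + 1) = \sum_(j < n) (j * m + 1) + \sum_(j < n) s j y.
    move=> y; rewrite -big_split /=; apply: eq_bigr => j _; lia.
  rewrite (eq_bigr _ (fun y _ => E y)).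
  rewrite big_split /= hK sum_nat_const.
  congr (_ * _ + _); by rewrite -(hr x) cardsE.
Qed.

Lemma key2 (V : finType) (e : rel V) (m n r : nat) (s : nat -> V -> nat) c :
  #|V| = m -> regular e r -> (forall j, injective (s j)) -> (forall j y, s j y < m) ->
  (forall y, \sum_(j < n) s j y = c) ->
  distance_magic (lex_nK1 e n).
Proof.
move=> hm hr hinj hlt hc; apply: (@key V e m n r s hm hr hinj hlt).
exists (r * c) => x; rewrite (eq_bigr _ (fun y _ => hc y)) sum_nat_const.
by rewrite -(hr x) cardsE.
Qed.

Lemma sum_pairs a k c (F : nat -> nat) :
  (forall i, i < k -> F (a + 2 * i) + F (a + 2 * i).+1 = c) ->
  \sum_(a <= j < a + 2 * k) F j = k * c.
Proof.
elim: k => [|k IH] H; first by rewrite muln0 addn0 big_geq.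
have -> : a + 2 * k.+1 = (a + 2 * k).+2 by lia.
rewrite big_nat_recr /=; last by lia.
rewrite big_nat_recr /=; last by lia.
rewrite IH; last by move=> i hi; apply: H; lia.
have := H k (ltnSn k); lia.
Qed.

Theorem theorem14 (V : finType) (e : rel V) (m n r : nat) :
  simple_graph e -> #|V| = m -> 1 <= m -> 1 < n -> regular e r ->
  (~~ odd n \/ odd (m * n) \/ distance_magic e) ->
  distance_magic (lex_nK1 e n).
Proof.
move=> _ hm hm1 hn hr.
pose rho (y : V) : nat := enum_rank y.
have rlt : forall y, rho y < m by move=> y; rewrite /rho -hm ltn_ord.
have rinj : injective rho by move=> y y' H; apply: enum_rank_inj; apply: val_inj.
case=> [hev | [hodd | [g [hg [ginj [k hk]]]]]].
- pose s (j : nat) (y : V) := if odd j then m.-1 - rho y else rho y.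
  apply: (@key2 V e m n r s (n./2 * m.-1)) => //.
  + move=> j y y'; rewrite /s; case: ifP => _ H; apply: rinj => //.
    have := rlt y; have := rlt y'; lia.
  + move=> j y; rewrite /s; case: ifP => _ //; have := rlt y; lia.
  + move=> y; rewrite -(big_mkord xpredT (fun j => s j y)).
    have E : n = 0 + 2 * n./2.
      have := odd_double_half n; rewrite (negbTE hev) -mul2n; lia.
    rewrite {1}E (@sum_pairs 0 n./2 m.-1) //.
    move=> i _; rewrite /s add0n /= oddM /=; have := rlt y; lia.
- rewrite oddM in hodd; case/andP: hodd => om on.
  pose h := m./2.
  have hmh : m = (2 * h).+1 by have := odd_double_half m; rewrite om -mul2n /h; lia.
  have hn3 : n = 3 + 2 * (n - 3)./2.
    have := odd_double_half n; rewrite on -mul2n.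
    have : n != 2 by apply/negP => /eqP E; rewrite E in on.
    lia.
  pose s1 (i : nat) := if i <= h then i + h else i - h.+1.
  pose s2 (i : nat) := 3 * h - (i + s1 i).
  pose s (j : nat) (y : V) :=
    if j == 0 then rho y else if j == 1 then s1 (rho y) else if j == 2 then s2 (rho y)
    else if odd j then rho y else m.-1 - rho y.
  apply: (@key2 V e m n r s (3 * h + (n - 3)./2 * m.-1)) => //.
  + move=> j y y'; have := rlt y; have := rlt y'; rewrite /s /s2 /s1.
    case: eqP => _; first by move=> _ _; apply: rinj.
    case: eqP => _.
      move=> l1 l2 H; apply: rinj; move: H.
      case: (leqP (rho y) h); case: (leqP (rho y') h); lia.
    case: eqP => _.
      move=> l1 l2 H; apply: rinj; move: H.
      case: (leqP (rho y) h); case: (leqP (rho y') h); lia.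
    case: ifP => _; first by move=> _ _; apply: rinj.
    move=> l1 l2 H; apply: rinj; lia.
  + move=> j y; have := rlt y; rewrite /s /s2 /s1.
    case: eqP => _ //; case: eqP => _.
      move=> ?; case: (leqP (rho y) h); lia.
    case: eqP => _.
      move=> ?; case: (leqP (rho y) h); lia.
    case: ifP => _ //; lia.
  + move=> y; rewrite -(big_mkord xpredT (fun j => s j y)).
    rewrite {1}hn3 (@big_cat_nat _ _ _ 3) //=.
    rewrite (@sum_pairs 3 (n - 3)./2 m.-1).
      rewrite !big_nat_recr //= big_geq //= /s /= /s2 /s1; have := rlt y.
      move=> ?; case: (leqP (rho y) h); lia.
    move=> i _; rewrite /s.
    have -> : (3 + 2 * i == 0) = false by lia.
    have -> : (3 + 2 * i == 1) = false by lia.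
    have -> : (3 + 2 * i == 2) = false by lia.
    have -> : ((3 + 2 * i).+1 == 0) = false by lia.
    have -> : ((3 + 2 * i).+1 == 1) = false by lia.
    have -> : ((3 + 2 * i).+1 == 2) = false by lia.
    rewrite /= oddD oddM /=; have := rlt y; lia.
- pose s (j : nat) (y : V) := g y - 1.
  apply: (@key V e m n r s) => //.
  + move=> j y y' H; apply: ginj; have := hg y; have := hg y'; rewrite /s in H; lia.
  + move=> j y; have := hg y; rewrite /s hm; lia.
  + exists (n * (k - r)) => x.
    rewrite (eq_bigr (fun y => n * (g y - 1))); last first.
      by move=> y _; rewrite sum_nat_const card_ord.
    rewrite -big_distrr /=; congr (_ * _).
    have E1 : \sum_(y | e x y) 1 = r by rewrite sum_nat_const -(hr x) cardsE muln1.
    have E2 : \sum_(y | e x y) (g y - 1) + \sum_(y | e x y) 1 = k.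
      rewrite -big_split /= -(hk x); apply: eq_bigr => y _; have := hg y; lia.
    lia.
Qed.
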